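(* Every graph admits a Helly EPG representation.
   Context: A grid is the set of integer points of the plane; a grid edge joins two grid points at distance $1$. A path in the grid is a sequence of distinct grid edges in which consecutive edges share exactly one grid point and non-consecutive edges share none. An EPG representation of a graph $G$ is a family $(P_v)_{v\in V(G)}$ of grid paths such that distinct $u,v$ are adjacent iff $P_u,P_v$ share a grid edge. It is Helly if every subfamily of pairwise edge-intersecting paths has a grid edge common to all its members. *)

(* Defs.v *)
From mathcomp Require Import all_boot all_order all_algebra.
Set Implicit Arguments. Unset Strict Implicit. Unset Printing Implicit Defensive.
Import GRing.Theory Num.Theory.
Local Open Scope ring_scope.

Definition gpoint := (int * int)%type.

(* A grid edge (an unordered pair of grid points at distance 1) is encoded
   canonically by its lower-left endpoint p and a direction flag:
   (p, false) is the horizontal edge {p, p + (1,0)},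
   (p, true)  is the vertical edge   {p, p + (0,1)}. *)
Definition gedge := (gpoint * bool)%type.

Definition gends (e : gedge) : seq gpoint :=
  let: (p, vert) := e in
  [:: p; if vert then (p.1, p.2 + 1) else (p.1 + 1, p.2)].

Definition nshared (e f : gedge) : nat :=
  count (fun x => x \in gends f) (gends e).

Definition grid_path (s : seq gedge) : Prop :=
  s != [::] /\ uniq s /\
  forall i j : nat, (i < j < size s)%N ->
    nshared (nth (0, 0, false) s i) (nth (0, 0, false) s j)
      = (if j == i.+1 then 1%N else 0%N).

Definition EPG_representation (V : finType) (adj : rel V)
    (P : V -> seq gedge) : Prop :=
  (forall v, grid_path (P v)) /\
  (forall u v, u != v -> (adj u v <-> exists g, g \in P u /\ g \in P v)).

Definition Helly (V : finType) (P : V -> seq gedge) : Prop :=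
  forall S : {set V},
    (forall u v, u \in S -> v \in S -> exists g, g \in P u /\ g \in P v) ->
    exists g, forall v, v \in S -> g \in P v.

(* Main.v *)
Require Import Defs.
From mathcomp Require Import all_boot all_order all_algebra zify.
Import Order.TTheory GRing.Theory Num.Theory.
Local Open Scope ring_scope.


Definition mkedge (p q : gpoint) : gedge :=
  if q == (p.1 + 1, p.2) then (p, false)
  else if q == (p.1, p.2 + 1) then (p, true) else (q, true).

Definition adjp (p q : gpoint) : bool :=
  [|| q == (p.1 + 1, p.2), q == (p.1, p.2 + 1) | q == (p.1, p.2 - 1)].

Lemma gends_mk p q : adjp p q ->
  gends (mkedge p q) = [:: p; q] \/ gends (mkedge p q) = [:: q; p].
Proof.
case: p => x y; rewrite /adjp /mkedge /=.
case: eqP => [->|_]; first by left.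
case: eqP => [->|_]; first by left.
move=> /eqP ->; right => /=; congr [:: _; _].
by rewrite subrK.
Qed.

Lemma nshared_mk p q r s : adjp p q -> adjp r s ->
  nshared (mkedge p q) (mkedge r s) = ((p \in [:: r; s]) + (q \in [:: r; s]))%N.
Proof.
move=> /gends_mk Hpq /gends_mk Hrs.
have E : gends (mkedge r s) =i [:: r; s].
  by case: Hrs => -> z; rewrite !inE // orbC.
rewrite /nshared (eq_count (a2 := fun z => z \in [:: r; s])); last by move=> z; rewrite /= E.
by case: Hpq => -> /=; rewrite ?addn0 // addnC.
Qed.

Lemma grid_path_pts (x : gpoint) (s : seq gpoint) :
  s != [::] -> uniq (x :: s) -> path adjp x s -> grid_path (pairmap mkedge x s).
Proof.
move=> sn0 us /(pathP x) pa.
have key : forall i j, (i < j < size s)%N ->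
    nshared (nth (0, 0, false) (pairmap mkedge x s) i)
            (nth (0, 0, false) (pairmap mkedge x s) j) = (j == i.+1 : nat).
  move=> i j /andP [ij js].
  have is_ : (i < size s)%N by lia.
  rewrite !(nth_pairmap x) // nshared_mk ?pa //.
  have hn : forall k, (k < size s)%N -> nth x s k = nth x (x :: s) k.+1 by [].
  rewrite !hn // !inE !(nth_uniq x _ _ us) /=; try lia.
  all: try (rewrite ltnS; by [exact: is_ | exact: js | exact: ltnW is_ | exact: ltnW js]).
split; first by rewrite -size_eq0 size_pairmap size_eq0.
split; last first.
  by move=> i j H; rewrite key // -(size_pairmap mkedge x).
have self : forall j, (j < size s)%N ->
    nshared (nth (0, 0, false) (pairmap mkedge x s) j)
            (nth (0, 0, false) (pairmap mkedge x s) j) = 2%N.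
  move=> j js; rewrite (nth_pairmap x) // nshared_mk ?pa // !inE !eqxx /=.
  by rewrite orbT.
apply/(uniqP (0, 0, false)) => i j; rewrite !inE size_pairmap => Hi Hj E.
apply/eqP; case: (ltngtP i j) => // H.
  have := key i j; rewrite H Hj E self //= => /(_ isT); by case: (j == i.+1).
have := key j i; rewrite H Hi -E self //= => /(_ isT); by case: (i == j.+1).
Qed.


Definition phi (B : int) (p : gpoint) : int :=
  p.1 * B + (if odd (absz p.1) then p.2 else - p.2).

Definition Qe (iv : int) (mb : nat -> bool) (g : gedge) : bool :=
  ((~~ g.2) && (g.1.2 == iv)) || (mb (absz g.1.1)./2 && (g.2 || (g.1.2 == -1))).

Definition Rel B iv mb p q := [&& adjp p q, phi B p < phi B q & Qe iv mb (mkedge p q)].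

Lemma absz_S m : absz (Posz m + 1) = m.+1.
Proof. by rewrite -[1]/(Posz 1) -PoszD addn1. Qed.

Lemma mk_R (p : gpoint) : mkedge p (p.1 + 1, p.2) = (p, false).
Proof. by rewrite /mkedge eqxx. Qed.
Lemma mk_U (p : gpoint) : mkedge p (p.1, p.2 + 1) = (p, true).
Proof.
rewrite /mkedge !xpair_eqE eqxx /=.
have -> : (p.1 == p.1 + 1) = false by lia.
by rewrite eqxx.
Qed.
Lemma mk_D (p : gpoint) : mkedge p (p.1, p.2 - 1) = ((p.1, p.2 - 1), true).
Proof.
rewrite /mkedge !xpair_eqE eqxx /=.
have -> : (p.1 == p.1 + 1) = false by lia.
have -> : (p.2 - 1 == p.2 + 1) = false by lia.
done.
Qed.

Lemma stepD B iv (mb : nat -> bool) (c : nat) (y : int) : mb c ->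
  Rel B iv mb (Posz c.*2, y) (Posz c.*2, y - 1).
Proof.
move=> mc; rewrite /Rel (mk_D (_, _)) /adjp /phi /Qe /= odd_double doubleK mc eqxx /= !orbT /=.
lia.
Qed.

Lemma stepU B iv (mb : nat -> bool) (c : nat) (y : int) : mb c ->
  Rel B iv mb (Posz c.*2 + 1, y) (Posz c.*2 + 1, y + 1).
Proof.
move=> mc; rewrite /Rel (mk_U (_, _)) /adjp /phi /Qe /=. rewrite eqxx orbT /= addn1 /= odd_double.
rewrite uphalf_double mc /=.
lia.
Qed.

Lemma stepR B iv (mb : nat -> bool) (m : nat) (y : int) :
  - B < 2 * y < B ->
  (y == iv) || (mb m./2 && (y == -1)) ->
  Rel B iv mb (Posz m, y) (Posz m + 1, y).
Proof.
move=> hB hq; rewrite /Rel (mk_R (_, _)) /adjp /phi /Qe /= !eqxx /= addn1 /=. rewrite hq andbT.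

case: (odd m) => /=; lia.
Qed.


Fixpoint down (X y : int) (n : nat) : seq gpoint :=
  if n is n'.+1 then (X, y - 1) :: down X (y - 1) n' else [::].
Fixpoint up (X y : int) (n : nat) : seq gpoint :=
  if n is n'.+1 then (X, y + 1) :: up X (y + 1) n' else [::].

Definition block (mb : nat -> bool) (i c : nat) : seq gpoint :=
  if mb c then
    down (Posz c.*2) (Posz i) i.+1 ++ (Posz c.*2 + 1, -1)
      :: up (Posz c.*2 + 1) (-1) i.+1 ++ [:: (Posz c.*2 + 1 + 1, Posz i)]
  else [:: (Posz c.*2 + 1, Posz i); (Posz c.*2 + 1 + 1, Posz i)].

Fixpoint blocks (mb : nat -> bool) (i k cnt : nat) : seq gpoint :=
  if cnt is c'.+1 then block mb i k ++ blocks mb i k.+1 c' else [::].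

Lemma path_down B iv (mb : nat -> bool) c n y : mb c ->
  path (Rel B iv mb) (Posz c.*2, y) (down (Posz c.*2) y n) /\
  last (Posz c.*2, y) (down (Posz c.*2) y n) = (Posz c.*2, y - Posz n).
Proof.
move=> mc; elim: n y => [|n IH] y /=; first by rewrite subr0.
have [p l] := IH (y - 1).
rewrite stepD //= p l; split => //; congr (_, _); lia.
Qed.

Lemma path_up B iv (mb : nat -> bool) c n y : mb c ->
  path (Rel B iv mb) (Posz c.*2 + 1, y) (up (Posz c.*2 + 1) y n) /\
  last (Posz c.*2 + 1, y) (up (Posz c.*2 + 1) y n) = (Posz c.*2 + 1, y + Posz n).
Proof.
move=> mc; elim: n y => [|n IH] y /=; first by rewrite addr0.
have [p l] := IH (y + 1).
rewrite stepU //= p l; split => //; congr (_, _); lia.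
Qed.

Lemma Pc2 c : Posz c.*2 + 1 = Posz (c.*2).+1.
Proof. lia. Qed.
Lemma Pc2' c : Posz c.*2 + 1 + 1 = Posz (c.+1).*2.
Proof. rewrite doubleS; lia. Qed.

Lemma path_block B (mb : nat -> bool) (i c : nat) : 2 * Posz i + 2 < B ->
  path (Rel B (Posz i) mb) (Posz c.*2, Posz i) (block mb i c) /\
  last (Posz c.*2, Posz i) (block mb i c) = (Posz (c.+1).*2, Posz i).
Proof.
move=> hB; rewrite /block.
have R2 : Rel B (Posz i) mb (Posz c.*2 + 1, Posz i) (Posz c.*2 + 1 + 1, Posz i).
  rewrite Pc2; apply: stepR; first lia. by rewrite eqxx.
case: ifP => mc.
  have [p1 l1] := path_down B (Posz i) mb c i.+1 (Posz i) mc.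
  have [p2 l2] := path_up B (Posz i) mb c i.+1 (-1) mc.
  have e1 : Posz i - Posz i.+1 = -1 by lia.
  have e2 : -1 + Posz i.+1 = Posz i by lia.
  rewrite e1 in l1; rewrite e2 in l2.
  move: p1 l1 p2 l2.
  set D := down _ _ _; set U := up _ _ _ => p1 l1 p2 l2; clearbody D U.
  split.
    rewrite cat_path p1 l1 /= cat_path p2 l2 /= R2 !andbT.
    apply: stepR; first lia.
    by rewrite doubleK mc eqxx orbT.
  by rewrite last_cat /= last_cat l2 /= Pc2'.
rewrite /= R2 andbT Pc2'; split => //.
rewrite andbT. apply: stepR; first lia.
by rewrite eqxx.
Qed.

Lemma path_blocks B (mb : nat -> bool) (i : nat) cnt k : 2 * Posz i + 2 < B ->
  path (Rel B (Posz i) mb) (Posz k.*2, Posz i) (blocks mb i k cnt) /\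
  last (Posz k.*2, Posz i) (blocks mb i k cnt) = (Posz (k + cnt).*2, Posz i).
Proof.
move=> hB; elim: cnt k => [|n IH] k /=; first by rewrite addn0.
have [p1 l1] := path_block B mb i k hB.
have [p2 l2] := IH k.+1.
rewrite cat_path p1 l1 p2 last_cat l1 l2; split => //.
by rewrite addSnnS.
Qed.

Lemma blocks_split (mb : nat -> bool) i k c d :
  blocks mb i k (c + d.+1) = blocks mb i k c ++ block mb i (k + c) ++ blocks mb i (k + c).+1 d.
Proof.
elim: c k => [|c IH] k /=; first by rewrite addn0.
by rewrite IH catA addSnnS.
Qed.

Lemma path_all B iv (mb : nat -> bool) x s :
  path (Rel B iv mb) x s -> all (Qe iv mb) (pairmap mkedge x s).
Proof.
elim: s x => [|y s IH] x //= /andP [r p].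
rewrite IH // andbT.
by case/and3P: r.
Qed.

Lemma last_down0 X y n : last (X, y) (down X y n) = (X, y - Posz n).
Proof.
elim: n y => [|n IH] y /=; first by rewrite subr0.
rewrite IH; congr (_, _); lia.
Qed.

Lemma last_down X y n z : last z (down X y n.+1) = (X, y - Posz n.+1).
Proof. rewrite /= last_down0; congr (_, _); lia. Qed.

Lemma block_edge (mb : nat -> bool) (i c : nat) z : mb c ->
  ((Posz c.*2, -1), false) \in pairmap mkedge z (block mb i c).
Proof.
move=> mc; rewrite /block mc pairmap_cat mem_cat last_down.
have -> : Posz i - Posz i.+1 = -1 by lia.
apply/orP; right. rewrite [pairmap _ _ _]/= (mk_R (c.*2 : int, -1)) inE eqxx; done.
Qed.

Lemma blocks_edge (mb : nat -> bool) (i c N : nat) z : (c < N)%N -> mb c ->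
  ((Posz c.*2, -1), false) \in pairmap mkedge z (blocks mb i 0 N).
Proof.
move=> cN mc.
have -> : N = (c + (N - c.+1).+1)%N by lia.
rewrite blocks_split !pairmap_cat !mem_cat add0n block_edge //.
by rewrite orbT.
Qed.


Definition clique {V : finType} (adj : rel V) (S : {set V}) : bool :=
  [forall a, forall b, ((a \in S) && (b \in S) && (a != b)) ==> adj a b].
Definition Sc (V : finType) (c : nat) : {set V} := nth set0 (enum {set V}) c.
Definition mbv {V : finType} (adj : rel V) (v : V) (c : nat) : bool :=
  (v \in Sc V c) && clique adj (Sc V c).
Definition Bc (V : finType) : int := Posz (2 * #|V| + 4).
Definition Pv {V : finType} (adj : rel V) (v : V) : seq gedge :=
  pairmap mkedge (Posz 0, Posz (enum_rank v))
    (blocks (mbv adj v) (enum_rank v) 0 #|{set V}|).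


Lemma pathv {V : finType} (adj : rel V) v : path (Rel (Bc V) (Posz (enum_rank v)) (mbv adj v))
   (Posz 0, Posz (enum_rank v)) (blocks (mbv adj v) (enum_rank v) 0 #|{set V}|).
Proof.
have hB : 2 * Posz (enum_rank v) + 2 < Bc V.
  have h : (enum_rank v < #|V|)%N := ltn_ord _. rewrite /Bc; lia.
by have [p _] := path_blocks (Bc V) (mbv adj v) (enum_rank v) #|{set V}| 0 hB.
Qed.

Lemma gridv {V : finType} (adj : rel V) v : grid_path (Pv adj v).
Proof.
apply: grid_path_pts.
- have : (0 < #|{set V}|)%N by apply/card_gt0P; exists set0.
  move: #|{set V}| => [|N] //= _.
  by rewrite /block; case: (mbv adj v 0).
- apply: (@sorted_uniq _ (fun p q => phi (Bc V) p < phi (Bc V) q)).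
  + by move=> y x z; apply: lt_trans.
  + by move=> x; rewrite ltxx.
  + apply: (sub_path _ (pathv adj v)) => x y; by case/and3P.
- apply: (sub_path _ (pathv adj v)) => x y; by case/and3P.
Qed.

Lemma Qv {V : finType} (adj : rel V) v g : g \in Pv adj v -> Qe (Posz (enum_rank v)) (mbv adj v) g.
Proof. by move: g; apply/allP; apply: path_all (pathv adj v). Qed.

Lemma shared_adj {V : finType} (adj : rel V) u v g : u != v -> g \in Pv adj u -> g \in Pv adj v -> adj u v.
Proof.
move=> uv /Qv hu /Qv hv.
case/orP: hu => [/andP [h1 h2] | /andP [m1 h1]];
case/orP: hv => [/andP [h3 h4] | /andP [m2 h3]].
- move/eqP: h2; move/eqP: h4 => -> [] e.
  have {}e : enum_rank v = enum_rank u by apply: val_inj.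
  move/enum_rank_inj: e => e.
  by rewrite e eqxx in uv.
- move/eqP: h2 => h2; rewrite (negbTE h1) /= in h3; move/eqP: h3; lia.
- move/eqP: h4 => h4; rewrite (negbTE h3) /= in h1; move/eqP: h1; lia.
- case/andP: m1 => uS /forallP /(_ u) /forallP /(_ v).
  case/andP: m2 => vS _.
  by rewrite uS vS uv /=.
Qed.

Lemma clique_edge {V : finType} (adj : rel V) (S : {set V}) v : clique adj S -> v \in S ->
  ((Posz (index S (enum {set V})).*2, -1), false) \in Pv adj v.
Proof.
move=> cS vS.
have iS : (index S (enum {set V}) < #|{set V}|)%N.
  by rewrite cardE index_mem mem_enum.
apply: blocks_edge => //.
by rewrite /mbv /Sc nth_index ?mem_enum // vS cS.
Qed.


Theorem lemma2p2 (V : finType) (adj : rel V) :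
  symmetric adj -> irreflexive adj ->
  exists P : V -> seq gedge, EPG_representation adj P /\ Helly P.
Proof.
move=> sym irr; exists (Pv adj); split; first split.
- exact: gridv.
- move=> u v uv; split.
    move=> a; exists (Posz ((index [set u; v] (enum {set V})).*2), -1, false).
    have cS : clique adj [set u; v].
      apply/forallP => x; apply/forallP => y; apply/implyP.
      rewrite !inE => /andP [/andP [/orP [] /eqP -> /orP [] /eqP ->]] //;
        rewrite ?eqxx //= => _; by rewrite sym.
    by split; apply: clique_edge; rewrite // !inE eqxx ?orbT.
  by case=> g [gu gv]; apply: shared_adj gu gv.
- move=> S hS.
  have cS : clique adj S.
    apply/forallP => x; apply/forallP => y; apply/implyP.
    case/andP => /andP [xS yS] xy.
    have [g [gx gy]] := hS x y xS yS.
    exact: shared_adj gx gy.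
  exists (Posz ((index S (enum {set V})).*2), -1, false) => v vS.
  exact: clique_edge.
Qed.
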